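(* Every CSNC ring is an NCSUC ring; that is, if every clean element of $R$ is strongly nil-clean, then every nil-clean element of $R$ is uniquely strongly clean.
   Context: All rings are associative with identity $1$. For a ring $R$, $\mathrm{Id}(R)$, $U(R)$, $\mathrm{Nil}(R)$ denote the sets of idempotents, units and nilpotent elements. An element $a\in R$ is clean if $a=e+u$ for some $e\in\mathrm{Id}(R)$, $u\in U(R)$; it is uniquely strongly clean if there is exactly one $e\in\mathrm{Id}(R)$ such that $a-e\in U(R)$ and $ae=ea$. An element $a$ is nil-clean if $a=e+q$ with $e\in \mathrm{Id}(R)$, $q\in\mathrm{Nil}(R)$, and strongly nil-clean if moreover $eq=qe$. A ring is CSNC if every clean element is strongly nil-clean, and NCSUC if every nil-clean element is uniquely strongly clean. *)

(* Defs.v *)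
From mathcomp Require Import all_boot all_algebra.
Set Implicit Arguments. Unset Strict Implicit. Unset Printing Implicit Defensive.
Import GRing.Theory.
Local Open Scope ring_scope.

Section Defs.
Variable R : unitRingType.

Definition idem (e : R) : Prop := e * e = e.
Definition nilp (q : R) : Prop := exists n : nat, q ^+ n = 0.
Definition unitP (u : R) : Prop := u \is a GRing.unit.

Definition clean (a : R) : Prop := exists e u, idem e /\ unitP u /\ a = e + u.

Definition uniquely_strongly_clean (a : R) : Prop :=
  exists e, (idem e /\ unitP (a - e) /\ a * e = e * a) /\
    forall f, idem f -> unitP (a - f) -> a * f = f * a -> f = e.

Definition nil_clean (a : R) : Prop := exists e q, idem e /\ nilp q /\ a = e + q.

Definition strongly_nil_clean (a : R) : Prop :=
  exists e q, idem e /\ nilp q /\ a = e + q /\ e * q = q * e.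

Definition CSNC : Prop := forall a : R, clean a -> strongly_nil_clean a.
Definition NCSUC : Prop := forall a : R, nil_clean a -> uniquely_strongly_clean a.
End Defs.

(* Main.v *)
Require Import Defs.
From mathcomp Require Import all_boot all_algebra.

Set Implicit Arguments. Unset Strict Implicit. Unset Printing Implicit Defensive.
Import GRing.Theory.
Local Open Scope ring_scope.

Section Aux.
Variable R : unitRingType.

Lemma nil_unit (p : R) N : p ^+ N = 0 -> (1 + p) \is a GRing.unit.
Proof.
move=> hN; set x := - p; set S := \sum_(i < N) x ^+ i.
have h := subrX1 x N.
rewrite /x exprNn hN mulr0 sub0r in h.
have c : GRing.comm x S.
  apply: commr_sum => i _; exact: commrX.
have e1 : (1 + p) * S = 1.
  rewrite (_ : 1 + p = -(x - 1)); last by rewrite opprB /x opprK.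
  by rewrite mulNr -h opprK.
apply/unitrP; exists S; split => //.
have c2 : GRing.comm (1 + p) S.
  have -> : 1 + p = - (x - 1) by rewrite opprB /x opprK.
  apply: commr_sym; apply: commrN; apply: commrD; first exact: commr_sym.
  exact: commrN1.
by rewrite -c2.
Qed.

Lemma pow_split (g p : R) k : g * g = g -> g * p = p * g ->
  g * (g + p) ^+ k = g * (1 + p) ^+ k /\ (1 - g) * (g + p) ^+ k = (1 - g) * p ^+ k.
Proof.
move=> gg gp; elim: k => [|k [IH1 IH2]]; first by rewrite !expr0.
rewrite !exprSr !mulrA IH1 IH2; split.
  have c : GRing.comm g ((1 + p) ^+ k).
    apply: commrX; apply: commrD; [exact: commr1| exact: gp].
  have e : g * (1 + p) ^+ k * g = g * (1 + p) ^+ k by rewrite c -mulrA gg.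
  by rewrite mulrDr e mulrDr mulr1.
have c : GRing.comm g (p ^+ k) by apply: commrX.
have e : (1 - g) * p ^+ k * g = 0.
  by rewrite -mulrA -c mulrA mulrBl mul1r gg subrr mul0r.
by rewrite mulrDr e add0r.
Qed.

Lemma pow_main (g p : R) N : g * g = g -> g * p = p * g -> p ^+ N = 0 ->
  g * (g + p) ^+ N = (g + p) ^+ N /\ (g + p) ^+ N = g * (1 + p) ^+ N.
Proof.
move=> gg gp pN; have [h1 h2] := pow_split N gg gp.
rewrite pN mulr0 mulrBl mul1r in h2.
have e : g * (g + p) ^+ N = (g + p) ^+ N by apply/eqP; rewrite eq_sym -subr_eq0 h2.
by split => //; rewrite -h1.
Qed.

Lemma idem_absorb (f r g p b : R) M N : f * f = f -> f * r = r * f -> r ^+ M = 0 ->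
  g * g = g -> g * p = p * g -> p ^+ N = 0 -> b = f + r -> b = g + p -> f * g = g.
Proof.
move=> ff fr rM gg gp pN hb1 hb2.
have rK : r ^+ (M + N) = 0 by rewrite exprD rM mul0r.
have pK : p ^+ (M + N) = 0 by rewrite addnC exprD pN mul0r.
have [hf _] := pow_main ff fr rK.
have [_ hg] := pow_main gg gp pK.
have u : (1 + p) ^+ (M + N) \is a GRing.unit by apply: unitrX; exact: nil_unit pN.
have eg : g = b ^+ (M + N) * ((1 + p) ^+ (M + N))^-1.
  by rewrite hb2 hg -mulrA mulrV // mulr1.
by rewrite eg mulrA hb1 hf -hb1.
Qed.

Lemma snc_unique (f r g p b : R) : f * f = f -> f * r = r * f -> Defs.nilp r ->
  g * g = g -> g * p = p * g -> Defs.nilp p -> b = f + r -> b = g + p -> f = g.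
Proof.
move=> ff fr [M rM] gg gp [N pN] hb1 hb2.
have e1 := idem_absorb ff fr rM gg gp pN hb1 hb2.
have idC : forall e : R, e * e = e -> (1 - e) * (1 - e) = 1 - e.
  by move=> e ee; rewrite mulrBl mul1r mulrBr mulr1 ee subrr subr0.
have cC : forall e q : R, e * q = q * e -> (1 - e) * (- q) = (- q) * (1 - e).
  by move=> e q eq; rewrite mulrN mulNr mulrBl mulrBr mul1r mulr1 eq.
have nN : forall (q : R) K, q ^+ K = 0 -> (- q) ^+ K = 0.
  by move=> q K qK; rewrite exprNn qK mulr0.
have b1 : 1 - b = (1 - f) + (- r) by rewrite hb1 opprD addrA.
have b2 : 1 - b = (1 - g) + (- p) by rewrite hb2 opprD addrA.
have e2 := idem_absorb (idC _ ff) (cC _ _ fr) (nN _ _ rM) (idC _ gg) (cC _ _ gp)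
  (nN _ _ pN) b1 b2.
move: e2; rewrite mulrBl mul1r mulrBr mulr1 e1 => e2.
have : (1 - g) - (f - g) - (1 - g) = 0 by rewrite e2 subrr.
by rewrite addrAC subrr add0r => /eqP; rewrite oppr_eq0 subr_eq0 => /eqP.
Qed.
End Aux.

Lemma UU (R : unitRingType) : CSNC R -> forall w : R, w \is a GRing.unit ->
  exists r, Defs.nilp r /\ w = 1 + r.
Proof.
move=> H w wu.
have cl : clean w by exists 0, w; rewrite /idem /unitP mulr0 add0r.
have [e [q [ee [[N qN] [hw eq]]]]] := H w cl.
have [_ h] := pow_main ee eq qN.
have z : (1 - e) * w ^+ N = 0 by rewrite hw h mulrA mulrBl mul1r ee subrr mul0r.
have e1 : 1 - e = 0.
  by rewrite -(mulrK (unitrX N wu) (1 - e)) z mul0r.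
exists q; split; first by exists N.
by rewrite hw; move/eqP: e1; rewrite subr_eq0 => /eqP <-.
Qed.

Theorem mainTheorem15 (R : unitRingType) : CSNC R -> NCSUC R.
Proof.
move=> H a [e [q [ee [[n qn] ha]]]].
have qu : unitP (q - 1).
  rewrite /unitP -opprB unitrN; apply: (nil_unit (N := n)).
  by rewrite exprNn qn mulr0.
have cl : clean (a - 1) by exists e, (q - 1); rewrite ha addrA.
have [g [p [gg [[N pN] [hb gp]]]]] := H _ cl.
have ha' : a = 1 + (g + p) by rewrite -hb addrC subrK.
exists g; split.
  split => //; split.
    by rewrite /unitP ha' addrCA addrC addrK; exact: nil_unit pN.
  by rewrite ha' mulrDl mulrDr mul1r mulr1 mulrDl mulrDr gg gp.
move=> f ff fu af.
have [r [hr har]] := UU H fu.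
have fr : f * r = r * f.
  have -> : r = a - f - 1 by rewrite har addrC addKr.
  by rewrite mulrBr mulrBl mulrBr mulrBl af ff mulr1 mul1r.
apply: (snc_unique (b := a - 1)) ff fr hr gg gp _ _ _ => //; first by exists N.
have -> : r = a - f - 1 by rewrite har addrC addKr.
by rewrite -!addrA addrCA [f + _]addrA subrr add0r.
Qed.
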